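(* Let $n \geq 1$ and $m \geq 3$ be integers. The corona graph $P_n \circ C_m$ is a total edge product cordial graph.
   Context: All graphs are finite and simple. $P_k$ denotes the path on $k$ vertices and $C_k$ the cycle on $k$ vertices. For graphs $G$ and $H$ with $V(G)=\{u_1,\dots,u_n\}$, the corona graph $G \circ H$ is obtained by taking one copy of $G$ and $n$ disjoint copies $H^1,\dots,H^n$ of $H$, and joining each vertex $u_i$ by an edge to every vertex of $H^i$. Given an edge labeling $f^*: E(G) \to \{0,1\}$, the induced vertex labeling $f: V(G)\to\{0,1\}$ is $f(v) = \prod\{f^*(uv) : uv \in E(G)\}$ (product of the labels of edges incident to $v$). Let $v_f(i)$ be the number of vertices with $f(v)=i$ and $e_f(i)$ the number of edges with $f^*(e)=i$, for $i=0,1$. The labeling $f^*$ is a total edge product cordial labeling if $|(v_f(0)+e_f(0)) - (v_f(1)+e_f(1))| \leq 1$, and a graph is total edge product cordial if it admits such a labeling. *)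

(* Defs.v *)
From mathcomp Require Import all_boot.
Set Implicit Arguments. Unset Strict Implicit. Unset Printing Implicit Defensive.

(* A finite simple graph is given by a vertex finType V and an adjacency
   relation e : rel V (symmetric, irreflexive for the graphs used below). *)

Definition path_adj (n : nat) : rel 'I_n :=
  fun i j => (i.+1 == j :> nat) || (j.+1 == i :> nat).

(* Cycle C_m on vertices 0..m-1 (simple for m >= 3). *)
Definition cycle_adj (m : nat) : rel 'I_m :=
  fun i j => (i.+1 %% m == j :> nat) || (j.+1 %% m == i :> nat).

(* Corona G o H: vertices are V (copy of G) plus V * W (copy H^u of H for each u). *)
Definition corona_adj (V W : finType) (eG : rel V) (eH : rel W) : rel (V + (V * W)) :=
  fun a b =>
    match a, b with
    | inl u, inl v => eG u v
    | inl u, inr (i, _) => u == i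
    | inr (i, _), inl u => i == u
    | inr (i, w), inr (j, w') => (i == j) && eH w w'
    end.

Definition edges (V : finType) (e : rel V) : {set {set V}} :=
  [set A : {set V} | [exists x, exists y, (A == [set x; y]) && e x y]].

Definition vlabel (V : finType) (e : rel V) (g : {set V} -> bool) (v : V) : nat :=
  \prod_(A in edges e | v \in A) (nat_of_bool (g A)).

Definition v_count (V : finType) (e : rel V) (g : {set V} -> bool) (i : nat) : nat :=
  #|[set v : V | vlabel e g v == i]|.

Definition e_count (V : finType) (e : rel V) (g : {set V} -> bool) (i : nat) : nat :=
  #|[set A in edges e | nat_of_bool (g A) == i]|.

Definition total_edge_product_cordial_labeling (V : finType) (e : rel V)
    (g : {set V} -> bool) : Prop :=
  let a := v_count e g 0 + e_count e g 0 in
  let b := v_count e g 1 + e_count e g 1 in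
  a <= b + 1 /\ b <= a + 1.

Definition total_edge_product_cordial (V : finType) (e : rel V) : Prop :=
  exists g : {set V} -> bool, total_edge_product_cordial_labeling e g.

(* Main.v *)
Require Import Defs.
From mathcomp Require Import all_boot zify.
Set Implicit Arguments. Unset Strict Implicit. Unset Printing Implicit Defensive.

Lemma set2_inj (T : finType) (a b c d : T) :
  [set a; b] = [set c; d] -> (a = c /\ b = d) \/ (a = d /\ b = c).
Proof.
move=> E.
have ha : a \in [set c; d] by rewrite -E !inE eqxx.
have hb : b \in [set c; d] by rewrite -E !inE eqxx orbT.
have hc : c \in [set a; b] by rewrite E !inE eqxx.
have hd : d \in [set a; b] by rewrite E !inE eqxx orbT.
move: ha hb hc hd; rewrite !inE => /orP[]/eqP ha /orP[]/eqP hb /orP[]/eqP hc /orP[]/eqP hd; subst; auto.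
Qed.

Lemma ordS2 M (j j' : 'I_M.+3) : ordS j = j' -> ordS j' = j -> False.
Proof.
move=> /(congr1 val) /= e1 /(congr1 val) /=; rewrite -e1.
case: j {e1} => j hj /=.
case: (ltnP j.+1 M.+3) => h1.
  rewrite (modn_small h1).
  case: (ltnP j.+2 M.+3) => h2; first by rewrite (modn_small h2); lia.
  have -> : j.+2 = M.+3 by lia.
  rewrite modnn; lia.
have -> : j.+1 = M.+3 by lia.
by rewrite modnn modn_small //; lia.
Qed.

Lemma prod_bool (I : finType) (P : pred I) (h : I -> bool) :
  \prod_(i | P i) nat_of_bool (h i) = [forall i, P i ==> h i].
Proof.
case: forallP => H.
  by rewrite big1 // => i Pi; have := H i; rewrite Pi /= => ->.
have /existsP[i] : [exists i, ~~ (P i ==> h i)].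
  by rewrite -negb_forall; apply/forallP.
rewrite negb_imply => /andP[Pi hi].
by rewrite (bigD1 i) //= (negbTE hi) mul0n.
Qed.

Lemma card_sum_pred (A B : finType) (P : pred (A + B)) :
  #|[set x | P x]| = #|[set a | P (inl a)]| + #|[set b | P (inr b)]|.
Proof.
rewrite -!sum1_card.
rewrite (eq_bigl (fun x => P x)); last by move=> x; rewrite inE.
rewrite big_sumType; congr (_ + _); apply: eq_bigl => x; by rewrite inE.
Qed.

Lemma card_lt (N p : nat) : p <= N -> #|[set k : 'I_N | k < p]| = p.
Proof.
move=> pN.
have -> : [set k : 'I_N | k < p] = [set widen_ord pN k | k : 'I_p].
  apply/setP => k; rewrite inE; apply/idP/imsetP => [kp|[k' _ ->]]; last by rewrite /= ltn_ord.
  by exists (Ordinal kp) => //; apply: val_inj.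
have winj : injective (widen_ord pN) by move=> x y /(congr1 val) /= e; apply: val_inj.
rewrite card_imset //.
by rewrite card_ord.
Qed.

Definition rank n m (s : 'I_n.+1 * 'I_m) : nat := s.2 * n.+1 + s.1.

Lemma card_rank n m p : p <= n.+1 * m ->
  #|[set s : 'I_n.+1 * 'I_m | rank s < p]| = p.
Proof.
move=> pN.
have rk (s : 'I_n.+1 * 'I_m) : rank s < m * n.+1.
  case: s => [[i hi] [j hj]]; rewrite /rank /=.
  have : j.+1 * n.+1 <= m * n.+1 by rewrite leq_mul2r hj orbT.
  rewrite mulSn; lia.
pose f s := Ordinal (rk s).
have finj : injective f.
  move=> [[i hi] [j hj]] [[i' hi'] [j' hj']] [] /= E.
  have E1 := congr1 (fun x => x %% n.+1) E.
  have E2 := congr1 (fun x => x %/ n.+1) E.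
  move: E1 E2 => /=; rewrite !modnMDl !divnMDl // !modn_small // !divn_small // !addn0.
  by move=> e1 e2; subst; congr pair; apply: val_inj.
rewrite -(card_imset _ finj).
transitivity #|[set k : 'I_(m * n.+1) | k < p]|; last by apply: card_lt; rewrite mulnC.
apply: eq_card => k; rewrite [RHS]inE; apply/imsetP/idP => [[s sp ->]|kp].
  by move: sp; rewrite inE.
have h1 : k %% n.+1 < n.+1 by rewrite ltn_pmod.
have h2 : k %/ n.+1 < m by rewrite ltn_divLR // mulnC.
exists (Ordinal h1, Ordinal h2); first by rewrite inE /rank /= -divn_eq.
by apply: val_inj; rewrite /= /rank /= -divn_eq.
Qed.
Section G.
Variables n m : nat.
Local Notation M := m.+3.
Local Notation Vt := ('I_n.+1 + ('I_n.+1 * 'I_M))%type.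
Local Notation Et := ('I_n + (('I_n.+1 * 'I_M) + ('I_n.+1 * 'I_M)))%type.
Local Notation G := (corona_adj (@path_adj n.+1) (@cycle_adj M)).

Definition phi (x : Et) : {set Vt} :=
  match x with
  | inl k => [set inl (inord k); inl (inord k.+1)]
  | inr (inl (i, j)) => [set inl i; inr (i, j)]
  | inr (inr (i, j)) => [set inr (i, j); inr (i, ordS j)]
  end.

Lemma inord_lo (k : 'I_n) : val (inord k : 'I_n.+1) = k :> nat.
Proof. exact: (inordK (leqW (ltn_ord k))). Qed.
Lemma inord_hi (k : 'I_n) : val (inord k.+1 : 'I_n.+1) = k.+1 :> nat.
Proof. have h : k.+1 < n.+1 by rewrite ltnS ltn_ord. exact: (inordK h). Qed.

Lemma phi_inj : injective phi.
Proof.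
case=> [k|[[i j]|[i j]]]; case=> [k'|[[i' j']|[i' j']]] /= /set2_inj [[]|[]].
all: try discriminate.
- move=> [] /(congr1 val); rewrite !inord_lo => e _; congr inl; exact: val_inj.
- move=> [] /(congr1 val) e1 [] /(congr1 val) e2; move: e1 e2.
  rewrite inord_lo inord_hi inord_lo inord_hi => e1 e2; exfalso.
  by rewrite e1 in e2; move/eqP: e2; rewrite -addn2 -{2}[nat_of_ord k']addn0 eqn_add2l.
- by move=> [->] [->].
- by move=> [-> ->].
- by move=> [-> e] [e']; exfalso; apply: (ordS2 e' (esym e)).
Qed.

Lemma phi_edges : edges G = phi @: setT.
Proof.
apply/setP => A; rewrite inE; apply/existsP/imsetP.
- case=> x /existsP[y /andP[/eqP -> adj]].
  case: x y adj => [u|[i j]] [v|[i' j']] /=.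
  + rewrite /path_adj => /orP[]/eqP e.
    * have hu : u < n by move: (ltn_ord v); rewrite -e ltnS.
      exists (inl (Ordinal hu)) => //; congr [set _; _]; congr inl; apply: val_inj.
        by rewrite inord_lo.
        by rewrite inord_hi.
    * have hv : v < n by move: (ltn_ord u); rewrite -e ltnS.
      exists (inl (Ordinal hv)) => //; rewrite setUC; congr [set _; _]; congr inl; apply: val_inj.
        by rewrite inord_lo.
        by rewrite inord_hi.
  + by move=> /eqP <-; exists (inr (inl (u, j'))).
  + by move=> /eqP ->; exists (inr (inl (v, j))) => //=; rewrite setUC.
  + move=> /andP[/eqP <- ]; rewrite /cycle_adj => /orP[]/eqP e.
    * exists (inr (inr (i, j))) => //=; congr [set _; _]; congr inr; congr pair; exact: val_inj.
    * exists (inr (inr (i, j'))) => //=; rewrite setUC; congr [set _; _]; congr inr; congr pair; exact: val_inj.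
- case=> x _ ->; case: x => [k|[[i j]|[i j]]] /=.
  + exists (inl (inord k)); apply/existsP; exists (inl (inord k.+1)); rewrite eqxx /= /path_adj.
    by rewrite inord_lo inord_hi eqxx.
  + exists (inl i); apply/existsP; exists (inr (i, j)); by rewrite eqxx /=.
  + exists (inr (i, j)); apply/existsP; exists (inr (i, ordS j)); apply/andP; split => //; apply/andP; split => //; by rewrite /cycle_adj /= eqxx.
Qed.


Section Lab.
Variables (p : nat) (q : bool).

Definition Zsel (x : Et) : bool :=
  match x with
  | inl _ => false
  | inr (inl s) => rank s < p
  | inr (inr s) => q && (s == (ord0, ord0))
  end.

Definition Zidx : {set Et} := [set x | Zsel x].
Definition gl (A : {set Vt}) : bool := A \notin phi @: Zidx.

Lemma sub_edges : phi @: Zidx \subset edges G.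
Proof. by rewrite phi_edges; apply: imsetS; apply: subsetT. Qed.

Lemma ecount0 : e_count G gl 0 = #|Zidx|.
Proof.
rewrite /e_count -(card_imset _ phi_inj); apply: eq_card => A.
rewrite inE /gl; case: (boolP (A \in phi @: Zidx)) => /= h; last by rewrite andbF.
by rewrite andbT (subsetP sub_edges).
Qed.

Lemma card_edges : #|edges G| = #|{: Et}|.
Proof. by rewrite phi_edges card_imset ?cardsT //; apply: phi_inj. Qed.

Lemma ecount1 : e_count G gl 1 = #|{: Et}| - #|Zidx|.
Proof.
rewrite /e_count -card_edges -(card_imset _ phi_inj) -(cardsDS sub_edges).
apply: eq_card => A; rewrite !inE /gl andbC.
by case: (A \in phi @: Zidx).
Qed.

Definition covd (v : Vt) : bool := [exists x in Zidx, v \in phi x].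

Lemma vlabel_eq v : vlabel G gl v = ~~ covd v.
Proof.
rewrite /vlabel prod_bool; congr nat_of_bool; apply/idP/idP.
- move=> /forallP H; apply/existsP => -[x /andP[xZ vx]].
  have := H (phi x); rewrite vx andbT phi_edges imset_f ?inE //= /gl imset_f //.
- move=> H; apply/forallP => A; apply/implyP => /andP[Ae vA]; apply/imsetP => -[x xZ AE].
  by move: H; rewrite /covd; case/existsP; exists x; rewrite xZ -AE vA.
Qed.

Lemma vcount0 : v_count G gl 0 = #|[set v | covd v]|.
Proof. by apply: eq_card => v; rewrite !inE vlabel_eq; case: (covd v). Qed.

Lemma vcount1 : v_count G gl 1 = #|{: Vt}| - #|[set v | covd v]|.
Proof.
rewrite -(cardsC [set v | covd v]) addKn.
by apply: eq_card => v; rewrite !inE vlabel_eq; case: (covd v).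
Qed.

Hypothesis hp : n.+1 < p.
Hypothesis hpK : p <= n.+1 * M.

Lemma covd_eq : [set v | covd v] = [set v : Vt | if v is inr s then rank s < p else true].
Proof.
apply/setP => v; rewrite !inE /covd; case: v => [u|s].
  apply/existsP; exists (inr (inl (u, ord0))); rewrite inE /= !inE eqxx andbT /rank /=.
  by rewrite mul0n add0n; apply: ltn_trans hp.
apply/existsP/idP => [[x /andP[]]|sp].
  case: x => [k|[[i j]|[i j]]]; rewrite inE //=.
  + by move=> rs /set2P[//|[->]].
  + case/andP=> _ /eqP[-> ->] /set2P[[->]|[->]]; rewrite /rank /=.
      by rewrite mul0n add0n; apply: ltn_trans hp.
    by rewrite modn_small // mul1n addn0.
case: s sp => i j sp; exists (inr (inl (i, j))); rewrite inE /= sp; apply/set2P; by right.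
Qed.

Lemma card_covd : #|[set v | covd v]| = n.+1 + p.
Proof.
rewrite covd_eq card_sum_pred /= card_rank //.
by rewrite (eq_card (B := 'I_n.+1)) ?card_ord // => u; rewrite !inE.
Qed.

Lemma card_Zidx : #|Zidx| = p + q.
Proof.
rewrite /Zidx card_sum_pred /= card_sum_pred /= card_rank //.
have -> : #|[set a : 'I_n | false]| = 0 by rewrite (eq_card (B := pred0)) ?card0 // => a; rewrite inE.
case: q.
  by rewrite (eq_card (B := [set (ord0, ord0) : 'I_n.+1 * 'I_M])) ?cards1 // => s; rewrite !inE.
by rewrite (eq_card (B := pred0)) ?card0 // => s; rewrite !inE.
Qed.

End Lab.
End G.

Theorem theorem3p2 (n m : nat) (hn : 1 <= n) (hm : 3 <= m) :
  total_edge_product_cordial (corona_adj (@path_adj n) (@cycle_adj m)).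
Proof.
case: n hn => // n _; case: m hm => [|[|[|m]]] // _.
set K := n.+1 * m.+3.
have hK : 3 * n.+1 <= K by rewrite /K mulnC; apply: leq_mul.
set T := 3 * K %/ 2.
have hp : n.+1 < T %/ 2 by rewrite /T; lia.
have hpK : T %/ 2 <= K by rewrite /T; lia.
exists (@gl n m (T %/ 2) (odd T)).
rewrite /total_edge_product_cordial_labeling; cbv zeta.
rewrite vcount0 vcount1 ecount0 ecount1 (@card_covd n m _ (odd T) hp hpK) (@card_Zidx n m _ (odd T) hpK).
rewrite !card_sum !card_prod !card_ord -/K.
have hq : (odd T : nat) = T %% 2 by rewrite modn2.
rewrite hq; split; rewrite /T; lia.
Qed.
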